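(* Let $m\ge2$ and, for $1\le k\le m$, let $\tilde\tau_k=t_{k+m-1}t_{k+m-2}\cdots t_{k+1}t_kt_{k+1}\cdots t_{k+m-2}t_{k+m-1}\in\tilde{\mathcal S}_{2m}$ and $\tilde\tau=\tilde\tau_1\tilde\tau_2\cdots\tilde\tau_m$. Then for all $1\le i\le m-1$ we have $\tilde\tau^{-1}t_i\tilde\tau=z^mt_{i+m}$ and $\tilde\tau^{-1}t_{i+m}\tilde\tau=z^mt_i$.
   Context: $\tilde{\mathcal S}_{2m}$ is the group with presentation $\langle z,t_1,\dots,t_{2m-1}\mid z^2=1,\ t_i^2=z\ (1\le i\le 2m-1),\ (t_it_{i+1})^3=z\ (1\le i\le 2m-2),\ t_it_j=zt_jt_i\ (|i-j|>1)\rangle$. (The element $\tilde\tau$ is a lift of the permutation $(1,m+1)(2,m+2)\cdots(m,2m)$ under $t_i\mapsto(i,i+1)$.) *)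

(* Defs.v *)
From mathcomp Require Import all_boot.
Set Implicit Arguments. Unset Strict Implicit. Unset Printing Implicit Defensive.

Definition is_group (G : Type) (mul : G -> G -> G) (one : G) (inv : G -> G) : Prop :=
  [/\ (forall x y w, mul x (mul y w) = mul (mul x y) w),
      (forall x, mul one x = x), (forall x, mul x one = x),
      (forall x, mul (inv x) x = one) & (forall x, mul x (inv x) = one)].

Definition gpow (G : Type) (mul : G -> G -> G) (one : G) (n : nat) (x : G) : G :=
  iter n (mul x) one.

Definition gprod (G : Type) (mul : G -> G -> G) (one : G) (s : seq G) : G :=
  foldr mul one s.

Definition stilde_rels (G : Type) (mul : G -> G -> G) (one : G)
    (m : nat) (z : G) (t : nat -> G) : Prop :=
  [/\ mul z z = one,
      (forall i, 1 <= i <= 2 * m - 1 -> mul (t i) (t i) = z),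
      (forall i, 1 <= i <= 2 * m - 2 ->
          gpow mul one 3 (mul (t i) (t i.+1)) = z)
    & (forall i j, 1 <= i <= 2 * m - 1 -> 1 <= j <= 2 * m - 1 ->
          (i.+1 < j) || (j.+1 < i) -> mul (t i) (t j) = mul z (mul (t j) (t i)))].

Definition tau_k (G : Type) (mul : G -> G -> G) (one : G) (m : nat) (t : nat -> G)
    (k : nat) : G :=
  gprod mul one (map t (rev (iota k.+1 m.-1) ++ k :: iota k.+1 m.-1)).

Definition tau (G : Type) (mul : G -> G -> G) (one : G) (m : nat) (t : nat -> G) : G :=
  gprod mul one (map (tau_k mul one m t) (iota 1 m)).

(* Main.v *)
Require Import Defs.
From mathcomp Require Import all_boot.
From mathcomp Require Import zify.
Set Implicit Arguments. Unset Strict Implicit. Unset Printing Implicit Defensive.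

Section Grp.
Variables (G : Type) (mul : G -> G -> G) (one : G) (inv : G -> G) (z : G) (t : nat -> G) (N : nat).
Local Notation "x ** y" := (mul x y) (at level 40, left associativity).
Hypothesis mulA : forall x y w, x ** (y ** w) = x ** y ** w.
Hypothesis mul1g : forall x, one ** x = x.
Hypothesis mulg1 : forall x, x ** one = x.
Hypothesis mulVg : forall x, inv x ** x = one.
Hypothesis mulgV : forall x, x ** inv x = one.
Hypothesis zz : z ** z = one.
Definition inr j := (0 < j) && (j <= N).
Definition far i j := (i.+1 < j) || (j.+1 < i).
Hypothesis tt : forall i, inr i -> t i ** t i = z.
Hypothesis br : forall i, inr i -> inr i.+1 -> t i ** t i.+1 ** t i = t i.+1 ** t i ** t i.+1.
Hypothesis fr : forall i j, inr i -> inr j -> far i j -> t i ** t j = z ** (t j ** t i).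

Definition W s := gprod mul one (map t s).
Definition zp e := if odd e then z else one.
Definition cj x g := inv g ** x ** g.

Lemma W_cons x s : W (x :: s) = t x ** W s. Proof. by []. Qed.
Lemma W_nil : W [::] = one. Proof. by []. Qed.
Lemma W1 x : W [:: x] = t x. Proof. by rewrite W_cons W_nil mulg1. Qed.
Lemma W_cat s1 s2 : W (s1 ++ s2) = W s1 ** W s2.
Proof. elim: s1 => [|x s IH] /=; first by rewrite W_nil mul1g.
by rewrite !W_cons IH mulA. Qed.

Lemma zpD a b : zp a ** zp b = zp (a + b).
Proof. rewrite /zp oddD; case: (odd a); case: (odd b) => //=; by rewrite ?mulg1 ?mul1g. Qed.
Lemma zp_mod a b : a %% 2 = b %% 2 -> zp a = zp b.
Proof. by rewrite /zp !modn2; case: (odd a); case: (odd b). Qed.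
Lemma zp1 : zp 1 = z. Proof. by []. Qed.

Lemma zct j : inr j -> z ** t j = t j ** z.
Proof. move=> h; by rewrite -(tt h) mulA. Qed.
Lemma zcW s : all inr s -> z ** W s = W s ** z.
Proof. elim: s => [|x s IH] /=; first by rewrite W_nil mulg1 mul1g.
case/andP=> hx hs; by rewrite W_cons mulA zct // -mulA IH // mulA. Qed.
Lemma zpcW e s : all inr s -> zp e ** W s = W s ** zp e.
Proof. rewrite /zp; case: (odd e) => h; [exact: zcW | by rewrite mulg1 mul1g]. Qed.
Lemma zpct e j : inr j -> zp e ** t j = t j ** zp e.
Proof. move=> h; have := zpcW e (s := [:: j]); rewrite W1 /=; apply; by rewrite h. Qed.

Lemma mulgI x y w : x ** y = x ** w -> y = w.
Proof. move=> h; by rewrite -(mul1g y) -(mulVg x) -mulA h mulA mulVg mul1g. Qed.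
Lemma mulIg x y w : y ** x = w ** x -> y = w.
Proof. move=> h; by rewrite -(mulg1 y) -(mulgV x) mulA h -mulA mulgV mulg1. Qed.

Lemma cj_iff x g y : cj x g = y <-> x ** g = g ** y.
Proof. rewrite /cj; split => [<-|h]; first by rewrite !mulA mulgV mul1g.
by rewrite -mulA h mulA mulVg mul1g. Qed.
Lemma cjE x g : x ** g = g ** cj x g. Proof. by apply/cj_iff. Qed.
Lemma cjM x g h : cj x (g ** h) = cj (cj x g) h.
Proof. apply/cj_iff. by rewrite mulA (cjE x g) -mulA (cjE (cj x g) h) mulA. Qed.
Lemma cjW_cat x s1 s2 : cj x (W (s1 ++ s2)) = cj (cj x (W s1)) (W s2).
Proof. by rewrite W_cat cjM. Qed.
Lemma cjW_cons x l s : cj x (W (l :: s)) = cj (cj x (t l)) (W s).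
Proof. by rewrite W_cons cjM. Qed.
Lemma cjZx e x s : all inr s -> cj (zp e ** x) (W s) = zp e ** cj x (W s).
Proof. move=> h; apply/cj_iff; by rewrite -mulA (cjE x) mulA zpcW // -mulA. Qed.
Lemma cjZg e x g : zp e ** x = x ** zp e -> cj x (zp e ** g) = cj x g.
Proof. move=> h; apply/cj_iff; by rewrite mulA -h -mulA (cjE x g) mulA. Qed.


Lemma far_sym i j : far i j = far j i.
Proof. by rewrite /far orbC. Qed.

Lemma swapW x M : inr x -> all inr M -> all (far x) M ->
  t x ** W M = zp (size M) ** (W M ** t x).
Proof.
move=> hx; elim: M => [|y M IH] /=; first by rewrite W_nil mulg1 mul1g.
case/andP=> hy hM /andP[fy fM].
rewrite W_cons mulA fr // -!mulA IH //.
rewrite mulA zct // -mulA [z ** (zp _ ** _)]mulA -zp1 zpD add1n [RHS]mulA zpct // -mulA.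
Qed.

Lemma W_move s1 x M s2 : all inr s1 -> inr x -> all inr M -> all (far x) M ->
  W (s1 ++ x :: M ++ s2) = zp (size M) ** W (s1 ++ M ++ x :: s2).
Proof.
move=> h1 hx hM fM; rewrite !W_cat W_cons W_cat [t x ** _]mulA swapW // W_cons.
by rewrite !mulA zpcW.
Qed.

Lemma zpK e x : zp e ** (zp e ** x) = x.
Proof. by rewrite mulA zpD /zp oddD addbb mul1g. Qed.

Lemma W_moveL s1 x M s2 : all inr s1 -> inr x -> all inr M -> all (far x) M ->
  W (s1 ++ M ++ x :: s2) = zp (size M) ** W (s1 ++ x :: M ++ s2).
Proof. move=> *; by rewrite W_move // zpK. Qed.

Lemma W_braid s1 a s2 : inr a -> inr a.+1 ->
  W (s1 ++ [:: a; a.+1; a] ++ s2) = W (s1 ++ [:: a.+1; a; a.+1] ++ s2).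
Proof. move=> h1 h2; by rewrite !W_cat !W_cons W_nil !mulg1 [t a ** (t a.+1 ** _)]mulA [t a.+1 ** (t a ** _)]mulA br. Qed.

Lemma BR1 a : inr a -> inr a.+1 -> cj (t a) (t a.+1 ** t a) = t a.+1.
Proof. move=> h1 h2; apply/cj_iff; by rewrite !mulA br. Qed.
Lemma BR2 a : inr a -> inr a.+1 -> cj (t a.+1) (t a ** t a.+1) = t a.
Proof. move=> h1 h2; apply/cj_iff; by rewrite !mulA br. Qed.
Lemma cjself x : cj x x = x.
Proof. by apply/cj_iff. Qed.

Lemma cjFar j M : inr j -> all inr M -> all (far j) M -> cj (t j) (W M) = zp (size M) ** t j.
Proof. move=> hj hM fM; apply/cj_iff; by rewrite swapW // mulA zpcW // -mulA. Qed.


Definition Tl a n := rev (iota a.+1 n) ++ a :: iota a.+1 n.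
Lemma iotaSr x n : iota x n.+1 = iota x n ++ [:: x + n].
Proof. by rewrite -addn1 iotaD. Qed.
Lemma Tl_S a n : Tl a n.+1 = (a+n).+1 :: Tl a n ++ [:: (a+n).+1].
Proof. by rewrite /Tl iotaSr rev_cat /= -catA addSn. Qed.
Lemma mem_Tl a n l : l \in Tl a n -> a <= l <= a + n.
Proof. rewrite /Tl mem_cat mem_rev inE !mem_iota; lia. Qed.
Lemma size_Tl a n : size (Tl a n) = n + n + 1.
Proof. rewrite /Tl size_cat /= size_rev size_iota; lia. Qed.
Lemma zp_odd e : e %% 2 = 1 -> zp e = z.
Proof. by move=> h; rewrite (@zp_mod e 1). Qed.
Lemma zp_even e : e %% 2 = 0 -> zp e = one.
Proof. by move=> h; rewrite (@zp_mod e 0). Qed.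
Lemma all_inr_Tl a n : 0 < a -> a + n <= N -> all inr (Tl a n).
Proof. move=> *; apply/allP => l /mem_Tl; rewrite /inr; lia. Qed.
Lemma all_inr_iota a n : 0 < a -> a + n <= N.+1 -> all inr (iota a n).
Proof. move=> *; apply/allP => l; rewrite mem_iota /inr; lia. Qed.

Lemma cT_far j a n : inr j -> 0 < a -> a + n <= N -> (j.+1 < a) || ((a+n).+1 < j) ->
  cj (t j) (W (Tl a n)) = z ** t j.
Proof.
move=> hj ha hn hf; rewrite cjFar ?all_inr_Tl //.
  by rewrite size_Tl zp_odd //; lia.
apply/allP => l /mem_Tl; rewrite /far; lia.
Qed.

Lemma Tl_SS a n : Tl a n.+2 = [:: (a+n).+2; (a+n).+1] ++ Tl a n ++ [:: (a+n).+1; (a+n).+2].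
Proof. by rewrite !Tl_S /= -catA addnS. Qed.

Lemma cT_in j a n : 0 < a -> a + n <= N -> a < j -> j.+1 <= a + n ->
  cj (t j) (W (Tl a n)) = z ** t j.
Proof.
elim: n => [|n IH] ha hn hj1 hj2; first by lia.
have hc : inr (a+n).+1 by rewrite /inr; lia.
have hjr : inr j by rewrite /inr; lia.
case: (leqP j.+1 (a + n)) => hjn.
- rewrite Tl_S cjW_cons.
  have E1 : cj (t j) (t (a+n).+1) = zp 1 ** t j.
    by rewrite -[t (a+n).+1]W1 cjFar //= ?hc ?andbT // /far; lia.
  rewrite E1 cjW_cat cjZx ?all_inr_Tl //; try lia.
  rewrite IH //; try lia.
  by rewrite -zp1 [zp 1 ** (zp 1 ** _)]mulA zpD cjZx /= ?hc // cjFar /= ?hc ?hjr //; last by rewrite /far andbT; lia.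
- have ej : j = (a + n.-1).+1 by lia.
  case: n IH hn hj1 hj2 hjn hc hjr ej => [|n] IH hn hj1 hj2 hjn hc hjr ej; first by lia.
  subst j; rewrite Tl_SS cjW_cat /= W_cons W1 BR1; last by rewrite /inr; lia.
  2: by [].
  have hc2 : inr (a+n).+2 by rewrite /inr; lia.
  rewrite cjW_cat cjFar //; last first.
  - by apply/allP => l /mem_Tl; rewrite /far; lia.
  - by apply: all_inr_Tl; lia.
  rewrite size_Tl zp_odd; last by lia.
  rewrite -zp1 cjZx /= ?hc ?hc2 //.
  rewrite W_cons W1 BR2 //. by rewrite /inr; lia.
Qed.


Lemma cj_single x l : cj x (W [:: l]) = cj x (t l). Proof. by rewrite W1. Qed.

Lemma Vk a k : 0 < a -> a + k.+1 <= N ->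
  cj (t a) (W (iota a.+1 k ++ Tl a k.+1)) = zp k ** t (a + k).+1.
Proof.
elim: k => [|k IH] ha hk.
  have h0 : inr a by rewrite /inr; lia.
  have h1 : inr a.+1 by rewrite /inr; lia.
  rewrite addn0 /Tl /= (_ : [:: a.+1, a & [:: a.+1]] = [:: a.+1; a] ++ [:: a.+1]) //.
  by rewrite cjW_cat W_cons W1 BR1 // W1 cjself /zp /= mul1g.
set b := (a + k).+1.
have hb : inr b by rewrite /inr; lia.
have hb1 : inr b.+1 by rewrite /inr; lia.
have ha' : inr a by rewrite /inr; lia.
have hQ : all inr (iota a.+1 k) by apply: all_inr_iota; lia.
have hT : all inr (Tl a k) by apply: all_inr_Tl; lia.
have fQ : all (far b.+1) (iota a.+1 k).
  by apply/allP => l; rewrite mem_iota /far; lia.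
have fT : all (far b.+1) (Tl a k).
  by apply/allP => l /mem_Tl; rewrite /far; lia.
have -> : iota a.+1 k.+1 ++ Tl a k.+2 =
   iota a.+1 k ++ [:: b; b.+1; b] ++ (Tl a k ++ [:: b; b.+1]).
  by rewrite iotaSr Tl_SS -!catA addSn.
rewrite W_braid //.
have -> : iota a.+1 k ++ [:: b.+1; b; b.+1] ++ (Tl a k ++ [:: b; b.+1]) =
   [::] ++ iota a.+1 k ++ b.+1 :: ([:: b; b.+1] ++ Tl a k ++ [:: b; b.+1]) by [].
rewrite W_moveL //.
have -> : [::] ++ b.+1 :: iota a.+1 k ++ [:: b; b.+1] ++ Tl a k ++ [:: b; b.+1] =
   (b.+1 :: iota a.+1 k ++ [:: b]) ++ b.+1 :: Tl a k ++ [:: b; b.+1].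
  by rewrite /= -!catA.
rewrite W_move //; last by rewrite /= all_cat hQ /= hb hb1.
have -> : (b.+1 :: iota a.+1 k ++ [:: b]) ++ Tl a k ++ [:: b.+1; b; b.+1] =
   ((b.+1 :: iota a.+1 k ++ [:: b]) ++ Tl a k) ++ [:: b.+1; b; b.+1] ++ [::].
  by rewrite cats0 -!catA.
rewrite -W_braid //.
have -> : ((b.+1 :: iota a.+1 k ++ [:: b]) ++ Tl a k) ++ [:: b; b.+1; b] ++ [::] =
   b.+1 :: (iota a.+1 k ++ Tl a k.+1) ++ [:: b.+1; b].
  by rewrite cats0 Tl_S !cat_cons -!catA /= -?catA /= -?catA.
rewrite cjZg; last by rewrite zpct.
rewrite cjZg; last by rewrite zpct.
rewrite cjW_cons -cj_single cjFar //=; [|by rewrite andbT | by rewrite andbT /far; lia].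
rewrite cjW_cat cjZx; last by rewrite all_cat hQ all_inr_Tl //; lia.
rewrite IH //; last by lia.
rewrite mulA zpD cjZx /=; last by rewrite hb hb1.
by rewrite W_cons W1 BR1 // addnS.
Qed.


Lemma Tl_split a n : Tl a n.+1 = rev (iota a.+2 n) ++ [:: a.+1; a; a.+1] ++ iota a.+2 n.
Proof. by rewrite /Tl /= rev_cons -cats1 -catA. Qed.

Lemma midA i n : 0 < i -> 0 < n -> i + n + 1 <= N ->
  cj (t i) (W (Tl i n ++ Tl i.+1 n)) = t (i + n).+1.
Proof.
case: n => [|n] hi hn hN; first by lia.
have h0 : inr i by rewrite /inr; lia.
have h1 : inr i.+1 by rewrite /inr; lia.
have -> : Tl i n.+1 ++ Tl i.+1 n.+1 =
  rev (iota i.+2 n) ++ [:: i.+1; i] ++ [:: i.+1] ++ (iota i.+2 n ++ Tl i.+1 n.+1).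
  by rewrite Tl_split -!catA.
rewrite cjW_cat cjFar //; last first.
- by apply/allP => l; rewrite mem_rev mem_iota /far; lia.
- by rewrite all_rev; apply: all_inr_iota; lia.
rewrite cjW_cat cjZx; last by rewrite /= h0 h1.
rewrite W_cons W1 BR1 // cjW_cat cjZx; last by rewrite /= h1.
rewrite W1 cjself cjZx; last first.
  by rewrite all_cat all_inr_iota ?all_inr_Tl //; lia.
rewrite Vk //; last by lia.
by rewrite size_rev size_iota mulA zpD /zp oddD addbb mul1g addSn addnS.
Qed.

Lemma Elem i n : 0 < i -> i + n + 1 <= N ->
  cj (t (i + n).+1) (W (rev (iota i n.+1) ++ rev (iota i.+1 n.+1))) = t i.
Proof.
elim: n => [|n IH] hi hN.
  have h0 : inr i by rewrite /inr; lia.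
  have h1 : inr i.+1 by rewrite /inr; lia.
  by rewrite addn0 /= W_cons W1 BR2.
set c := (i + n).+1.
have hc : inr c by rewrite /inr; lia.
have hc1 : inr c.+1 by rewrite /inr; lia.
have -> : rev (iota i n.+2) ++ rev (iota i.+1 n.+2) =
    [:: c] ++ rev (iota i n.+1) ++ c.+1 :: rev (iota i.+1 n.+1).
  by rewrite (iotaSr i n.+1) (iotaSr i.+1 n.+1) !rev_cat /= addSn addnS.
have fD : all (far c.+1) (rev (iota i n.+1)).
  by apply/allP => l; rewrite mem_rev mem_iota /far; lia.
have hD : all inr (rev (iota i n.+1)) by rewrite all_rev; apply: all_inr_iota; lia.
have hs : all inr [:: c] by rewrite /= hc.
rewrite W_moveL //.
rewrite addnS cjZg ?zpct //.
rewrite (_ : [:: c] ++ c.+1 :: rev (iota i n.+1) ++ rev (iota i.+1 n.+1) = [:: c; c.+1] ++ (rev (iota i n.+1) ++ rev (iota i.+1 n.+1))) //.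
rewrite cjW_cat W_cons W1 BR2 //.
by rewrite IH //; lia.
Qed.

Lemma Dj i n l s : 0 < i -> i + n <= N -> i <= l -> l.+1 <= i + n ->
  W (rev (iota i n.+1) ++ l.+1 :: s) =
  zp ((l - i) + (i + n - l.+1)) ** W (l :: rev (iota i n.+1) ++ s).
Proof.
move=> hi hN h1 h2.
set q := l - i. set p := i + n - l.+1.
have E : iota i n.+1 = iota i q ++ [:: l; l.+1] ++ iota l.+2 p.
  have Hn : n.+1 = q + (2 + p) by rewrite /q /p; lia.
  have Hq : i + q = l by rewrite /q; lia.
  by rewrite Hn !iotaD Hq addn2.
have hl : inr l by rewrite /inr; lia.
have hl1 : inr l.+1 by rewrite /inr; lia.
have hD1 : all inr (rev (iota l.+2 p)) by rewrite all_rev; apply: all_inr_iota; lia.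
have hD2 : all inr (rev (iota i q)) by rewrite all_rev; apply: all_inr_iota; lia.
rewrite E !rev_cat (_ : rev [:: l; l.+1] = [:: l.+1; l]) // -!catA.
rewrite (_ : rev (iota l.+2 p) ++ [:: l.+1; l] ++ rev (iota i q) ++ l.+1 :: s =
   (rev (iota l.+2 p) ++ [:: l.+1; l]) ++ rev (iota i q) ++ l.+1 :: s); last by rewrite -catA.
rewrite W_moveL //; last first.
- by apply/allP => x; rewrite mem_rev mem_iota /far; lia.
- by rewrite all_cat hD1 /= hl hl1.
rewrite -catA /= (_ : [:: l.+1, l, l.+1 & rev (iota i q) ++ s] = [:: l.+1; l; l.+1] ++ (rev (iota i q) ++ s)) //.
rewrite -W_braid //.
rewrite (_ : rev (iota l.+2 p) ++ [:: l; l.+1; l] ++ rev (iota i q) ++ s =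
   [::] ++ rev (iota l.+2 p) ++ l :: ([:: l.+1; l] ++ rev (iota i q) ++ s)) //.
rewrite W_moveL //; last first.
- by apply/allP => x; rewrite mem_rev mem_iota /far; lia.
by rewrite !size_rev !size_iota mulA zpD.
Qed.


Lemma Djc i n l s : 0 < i -> i + n + 1 <= N -> i <= l -> l.+1 <= i + n -> all inr s ->
  cj (t (i+n).+1) (W (rev (iota i n.+1) ++ l.+1 :: s)) =
  z ** cj (t (i+n).+1) (W (rev (iota i n.+1) ++ s)).
Proof.
move=> hi hN h1 h2 hs.
have hb : inr (i+n).+1 by rewrite /inr; lia.
have hl : inr l by rewrite /inr; lia.
rewrite Dj //; last by lia.
rewrite cjZg ?zpct // cjW_cons -cj_single cjFar //=; last 2 first.
- by rewrite hl.
- by rewrite andbT /far; lia.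
rewrite -zp1 cjZx // all_cat hs andbT; apply/allP => x; rewrite mem_rev inE mem_iota /inr; lia.
Qed.

Lemma DA i n k s : 0 < i -> i + n + 1 <= N -> k <= n -> all inr s ->
  cj (t (i+n).+1) (W (rev (iota i n.+1) ++ iota i.+1 k ++ s)) =
  zp k ** cj (t (i+n).+1) (W (rev (iota i n.+1) ++ s)).
Proof.
move=> hi hN; elim: k s => [|k IH] s hk hs; first by rewrite /= mul1g.
rewrite (iotaSr i.+1 k) -catA /= IH //; last by rewrite /= hs andbT /inr; lia.
  2: by lia.
rewrite (_ : i.+1 + k = (i + k).+1); last by lia.
by rewrite Djc //; try lia; rewrite -zp1 mulA zpD addn1.
Qed.

Lemma Tl_alt a n : Tl a n = rev (iota a n.+1) ++ iota a.+1 n.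
Proof. by rewrite /Tl /= rev_cons -cats1 -catA. Qed.

Lemma midB i n : 0 < i -> i + n + 1 <= N ->
  cj (t (i + n).+1) (W (Tl i n ++ Tl i.+1 n)) = t i.
Proof.
move=> hi hN.
have hA' : all inr (iota i.+2 n) by apply: all_inr_iota; lia.
have hD' : all inr (rev (iota i.+1 n.+1)) by rewrite all_rev; apply: all_inr_iota; lia.
rewrite !Tl_alt -catA DA //; last by rewrite all_cat hD' hA'.
rewrite catA cjW_cat Elem //.
rewrite cjFar //; last by apply/allP => l; rewrite mem_iota /far; lia.
  2: by rewrite /inr; lia.
by rewrite size_iota zpK.
Qed.


Lemma cj1 x : cj x one = x.
Proof. by apply/cj_iff; rewrite mulg1 mul1g. Qed.

Definition P n s := gprod mul one (map (fun k => W (Tl k n)) s).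
Lemma P_cat n s1 s2 : P n (s1 ++ s2) = P n s1 ** P n s2.
Proof. elim: s1 => [|x s IH] /=; first by rewrite mul1g.
by rewrite -mulA -IH. Qed.

Lemma P_pass n j e s : (forall k, k \in s -> cj (t j) (W (Tl k n)) = z ** t j) ->
  (forall k, k \in s -> all inr (Tl k n)) ->
  cj (zp e ** t j) (P n s) = zp (e + size s) ** t j.
Proof.
elim: s e => [|k s IH] e h1 h2 /=; first by rewrite addn0 cj1.
have -> : P n (k :: s) = W (Tl k n) ** P n s by [].
rewrite cjM cjZx ?h2 ?mem_head // h1 ?mem_head // -zp1 mulA zpD IH.
- by rewrite addn1 addnS.
- by move=> k' hk; apply: h1; rewrite inE hk orbT.
- by move=> k' hk; apply: h2; rewrite inE hk orbT.
Qed.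

Lemma P_pass0 n j s : (forall k, k \in s -> cj (t j) (W (Tl k n)) = z ** t j) ->
  (forall k, k \in s -> all inr (Tl k n)) ->
  cj (t j) (P n s) = zp (size s) ** t j.
Proof. move=> h1 h2; by rewrite -(P_pass 0 h1 h2) mul1g. Qed.

Lemma gpow_zp n : gpow mul one n z = zp n.
Proof. elim: n => [|n IH] //=; by rewrite /gpow /= -/(gpow mul one n z) IH -zp1 zpD. Qed.

Lemma main_sec m i : N = (2 * m - 1)%N -> 2 <= m -> 1 <= i <= m - 1 ->
  cj (t i) (P m.-1 (iota 1 m)) = zp m ** t (i + m) /\
  cj (t (i + m)) (P m.-1 (iota 1 m)) = zp m ** t i.
Proof.
move=> hN hm hi.
have Ei : iota 1 m = iota 1 i.-1 ++ [:: i; i.+1] ++ iota i.+2 (m - i.+1).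
  have -> : m = (i.-1 + (2 + (m - i.+1)))%N by lia.
  rewrite !iotaD (_ : (1 + i.-1 = i)%N); last by lia.
  by rewrite (_ : (i + 2 = i.+2)%N); [ |lia] ; congr (_ ++ (_ ++ iota _ _)); lia.
have hTl : forall k, k \in iota 1 m -> all inr (Tl k m.-1).
  by move=> k; rewrite mem_iota => hk; apply: all_inr_Tl; lia.
have hPm : P m.-1 [:: i; i.+1] = W (Tl i m.-1 ++ Tl i.+1 m.-1).
  by rewrite W_cat /P /= mulg1.
have hall : all inr (Tl i m.-1 ++ Tl i.+1 m.-1).
  by rewrite all_cat !all_inr_Tl //; lia.
rewrite Ei P_cat P_cat hPm !cjM.
split.
- rewrite P_pass0; first last.
  + by move=> k hk; apply: hTl; rewrite Ei mem_cat hk.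
  + move=> k; rewrite mem_iota => hk; apply: cT_in; lia.
  rewrite cjZx // midA; try lia.
  rewrite (_ : (i + m.-1).+1 = i + m)%N; last by lia.
  rewrite P_pass; first last.
  + by move=> k hk; apply: hTl; rewrite Ei !mem_cat hk !orbT.
  + move=> k; rewrite mem_iota => hk; apply: cT_in; lia.
  by rewrite !size_iota; congr (_ ** _); apply: zp_mod; lia.
- rewrite P_pass0; first last.
  + by move=> k hk; apply: hTl; rewrite Ei mem_cat hk.
  + move=> k; rewrite mem_iota => hk; apply: cT_far; rewrite ?/inr; lia.
  rewrite cjZx // (_ : i + m = (i + m.-1).+1)%N; last by lia.
  rewrite midB; try lia.
  rewrite P_pass; first last.
  + by move=> k hk; apply: hTl; rewrite Ei !mem_cat hk !orbT.
  + move=> k; rewrite mem_iota => hk; apply: cT_far; rewrite ?/inr; lia.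
  by rewrite !size_iota; congr (_ ** _); apply: zp_mod; lia.
Qed.

Lemma braid_of a b : a ** a = z -> b ** b = z ->
  a ** b ** (a ** b ** (a ** b ** one)) = z -> a ** b ** a = b ** a ** b.
Proof.
move=> ha hb h3.
have za : z ** a = a ** z by rewrite -ha mulA.
have zb : z ** b = b ** z by rewrite -hb mulA.
apply: (@mulIg (b ** a ** b)).
have -> : b ** a ** b ** (b ** a ** b) = z.
  rewrite -!mulA [b ** (b ** _)]mulA hb [z ** (a ** b)]mulA za -[a ** z ** b]mulA.
  by rewrite [a ** (a ** _)]mulA ha [z ** (z ** b)]mulA zz mul1g hb.
rewrite -h3 mulg1 !mulA.
by [].
Qed.

End Grp.

Theorem lemma4p5 (G : Type) (mul : G -> G -> G) (one : G) (inv : G -> G)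
  (HG : is_group mul one inv) (m : nat) (hm : 2 <= m) (z : G) (t : nat -> G)
  (Hrel : stilde_rels mul one m z t) :
  forall i, 1 <= i <= m - 1 ->
    mul (mul (inv (tau mul one m t)) (t i)) (tau mul one m t)
      = mul (gpow mul one m z) (t (i + m))
    /\ mul (mul (inv (tau mul one m t)) (t (i + m))) (tau mul one m t)
      = mul (gpow mul one m z) (t i).
Proof.
case: HG => mA m1 m1' mV mV'.
case: Hrel => zz tt br3 fr.
have tt' : forall i, inr (2 * m - 1) i -> mul (t i) (t i) = z.
  by move=> i; rewrite /inr => /andP[h1 h2]; apply: tt; rewrite h1 h2.
have br' : forall i, inr (2 * m - 1) i -> inr (2 * m - 1) i.+1 ->
    mul (mul (t i) (t i.+1)) (t i) = mul (mul (t i.+1) (t i)) (t i.+1).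
  move=> i h1 h2; apply: (braid_of (inv := inv) mA m1 m1' mV' zz); try exact: tt'.
  have := br3 i; rewrite /gpow /=; apply; move: h1 h2; rewrite /inr; lia.
have fr' : forall i j, inr (2 * m - 1) i -> inr (2 * m - 1) j -> far i j ->
    mul (t i) (t j) = mul z (mul (t j) (t i)).
  move=> i j; rewrite /inr => /andP[h1 h2] /andP[h3 h4] hf; apply: fr => //.
  - by rewrite h1 h2.
  - by rewrite h3 h4.
move=> i hi.
have [A B] := main_sec mA m1 m1' mV mV' zz tt' br' fr' (erefl _) hm hi.
rewrite !(gpow_zp m1 m1' zz).
exact: (conj A B).
Qed.
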